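(* Let $(s_n)_{n\in\mathbb{Z}}$, $(t_n)_{n\in\mathbb{Z}}$ be strictly increasing sequences of reals with $\lim_{n\to-\infty}s_n=0$, $\lim_{n\to+\infty}s_n=\lim_{n\to-\infty}t_n=1$, $\lim_{n\to+\infty}t_n=2$, and let $X=\{0,1,2\}\cup\{s_n:n\in\mathbb{Z}\}\cup\{t_n:n\in\mathbb{Z}\}\subset[0,2]$ with the usual metric. Define $f\colon X\to X$ by $f(y)=y$ for $y\in\{0,1,2\}$, $f(s_n)=s_{n+1}$, $f(t_n)=t_{n+1}$. Then $f$ is an expansive homeomorphism which has the limit shadowing property but not the shadowing property.
   Context: A homeomorphism $f$ is expansive if there is $e>0$ such that $d(f^n(x),f^n(y))\le e$ for all $n\in\mathbb{Z}$ implies $x=y$. Shadowing property: for every $\epsilon>0$ there is $\delta>0$ such that every sequence $(x_i)_{i\ge0}$ with $d(f(x_i),x_{i+1})\le\delta$ for all $i$ admits $x$ with $d(x_i,f^i(x))\le\epsilon$ for all $i$. Limit shadowing property: every sequence with $\lim_i d(f(x_i),x_{i+1})=0$ admits $y$ with $\lim_i d(x_i,f^i(y))=0$. *)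

(* Defs.v *)
From Stdlib Require Import Reals ZArith.
Open Scope R_scope.

Definition lim_Zplus (s : Z -> R) (l : R) : Prop :=
  forall eps, eps > 0 -> exists N : Z, forall n : Z, (N <= n)%Z -> Rabs (s n - l) < eps.
Definition lim_Zminus (s : Z -> R) (l : R) : Prop :=
  forall eps, eps > 0 -> exists N : Z, forall n : Z, (n <= N)%Z -> Rabs (s n - l) < eps.

Definition strictly_increasing_Z (s : Z -> R) : Prop :=
  forall m n : Z, (m < n)%Z -> s m < s n.

Definition Xset (s t : Z -> R) (y : R) : Prop :=
  y = 0 \/ y = 1 \/ y = 2 \/ (exists n : Z, y = s n) \/ (exists n : Z, y = t n).

Definition is_homeomorphism_on (X : R -> Prop) (f : R -> R) : Prop :=
  (forall x, X x -> X (f x)) /\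
  (forall x y, X x -> X y -> f x = f y -> x = y) /\
  (forall y, X y -> exists x, X x /\ f x = y) /\
  (forall x, X x -> forall eps, eps > 0 -> exists delta, delta > 0 /\
     forall z, X z -> Rabs (z - x) < delta -> Rabs (f z - f x) < eps) /\
  (* continuity of f^{-1} on X, at the point f x *)
  (forall x, X x -> forall eps, eps > 0 -> exists delta, delta > 0 /\
     forall z, X z -> Rabs (f z - f x) < delta -> Rabs (z - x) < eps).

(* u is the full (Z-indexed) f-orbit of u 0 in X: u n = f^n (u 0) for all n in Z
   (for a bijection f of X this orbit is unique). *)
Definition Z_orbit (X : R -> Prop) (f : R -> R) (u : Z -> R) : Prop :=
  forall n : Z, X (u n) /\ u (n + 1)%Z = f (u n).

Definition expansive_on (X : R -> Prop) (f : R -> R) : Prop :=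
  exists e, e > 0 /\
    forall u v : Z -> R, Z_orbit X f u -> Z_orbit X f v ->
      (forall n : Z, Rabs (u n - v n) <= e) -> u 0%Z = v 0%Z.

Definition shadowing_on (X : R -> Prop) (f : R -> R) : Prop :=
  forall eps, eps > 0 -> exists delta, delta > 0 /\
    forall x : nat -> R, (forall i, X (x i)) ->
      (forall i, Rabs (f (x i) - x (S i)) <= delta) ->
      exists y, X y /\ forall i, Rabs (x i - Nat.iter i f y) <= eps.

Definition limit_shadowing_on (X : R -> Prop) (f : R -> R) : Prop :=
  forall x : nat -> R, (forall i, X (x i)) ->
    Un_cv (fun i => Rabs (f (x i) - x (S i))) 0 ->
    exists y, X y /\ Un_cv (fun i => Rabs (x i - Nat.iter i f y)) 0.

(* Main.v *)
Require Import Defs.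
From Stdlib Require Import Reals ZArith Lra Lia Classical.
Open Scope R_scope.

Ltac rabs := unfold Rabs in *; repeat match goal with
  | |- context[Rcase_abs ?x] => destruct (Rcase_abs x)
  | H: context[Rcase_abs ?x] |- _ => destruct (Rcase_abs x) end; lra.

Lemma inc_le (q : Z -> R) m n : strictly_increasing_Z q -> (m <= n)%Z -> q m <= q n.
Proof. intros H Hmn. destruct (Z.eq_dec m n). subst; lra. left; apply H; lia. Qed.

Lemma inc_lt_rev (q : Z -> R) m n : strictly_increasing_Z q -> q m < q n -> (m < n)%Z.
Proof. intros H Hq. destruct (Z_lt_le_dec m n); auto. pose proof (inc_le q n m H l); lra. Qed.

Lemma inc_le_rev (q : Z -> R) m n : strictly_increasing_Z q -> q m <= q n -> (m <= n)%Z.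
Proof. intros H Hq. destruct (Z_le_gt_dec m n); auto. assert (q n < q m) by (apply H; lia); lra. Qed.

Lemma inc_inj (q : Z -> R) m n : strictly_increasing_Z q -> q m = q n -> m = n.
Proof. intros H Hq. pose proof (inc_le_rev q m n H ltac:(lra)). pose proof (inc_le_rev q n m H ltac:(lra)). lia. Qed.

Lemma range (q : Z -> R) a b n : strictly_increasing_Z q -> lim_Zminus q a -> lim_Zplus q b ->
  a < q n < b.
Proof.
  intros H Ha Hb. split.
  - destruct (Rlt_le_dec a (q n)); auto. exfalso.
    assert (Hg : q n - q (n-1)%Z > 0) by (assert (q (n-1)%Z < q n) by (apply H; lia); lra).
    destruct (Ha _ Hg) as [N HN]. set (m := Z.min N (n-1)).
    assert (Hm := HN m ltac:(unfold m; lia)).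
    assert (q m <= q (n-1)%Z) by (apply inc_le; auto; unfold m; lia). clear HN Ha Hb. clearbody m. idtac. rabs.
  - destruct (Rlt_le_dec (q n) b); auto. exfalso.
    assert (Hg : q (n+1)%Z - q n > 0) by (assert (q n < q (n+1)%Z) by (apply H; lia); lra).
    destruct (Hb _ Hg) as [N HN]. set (m := Z.max N (n+1)).
    assert (Hm := HN m ltac:(unfold m; lia)).
    assert (q (n+1)%Z <= q m) by (apply inc_le; auto; unfold m; lia). clear HN Ha Hb. clearbody m. rabs.
Qed.

Definition Hyp (s t : Z -> R) (f : R -> R) : Prop :=
  strictly_increasing_Z s /\ strictly_increasing_Z t /\
  lim_Zminus s 0 /\ lim_Zplus s 1 /\ lim_Zminus t 1 /\ lim_Zplus t 2 /\
  f 0 = 0 /\ f 1 = 1 /\ f 2 = 2 /\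
  (forall n : Z, f (s n) = s (n + 1)%Z) /\ (forall n : Z, f (t n) = t (n + 1)%Z).

Ltac unH H := destruct H as (Is & It & Ls0 & Ls1 & Lt1 & Lt2 & f0 & f1 & f2 & fs & ft).

Ltac addr s t rs rt T := match T with
  | s ?a => pose proof (rs a) | t ?a => pose proof (rt a) | _ => idtac end.

Lemma rs_ s t f (H : Hyp s t f) n : 0 < s n < 1.
Proof. unH H. apply range; auto. Qed.
Lemma rt_ s t f (H : Hyp s t f) n : 1 < t n < 2.
Proof. unH H. apply range; auto. Qed.

Lemma X_bd s t f (H : Hyp s t f) y : Xset s t y -> 0 <= y <= 2.
Proof. intros Hy. pose proof (rs_ s t f H). pose proof (rt_ s t f H).
  destruct Hy as [->|[->|[->|[[m ->]|[m ->]]]]]; try lra;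
  [specialize (H0 m) | specialize (H1 m)]; lra. Qed.

Lemma f_X s t f (H : Hyp s t f) y : Xset s t y -> Xset s t (f y).
Proof. intros Hy. pose proof H as H'. unH H'. unfold Xset.
  destruct Hy as [->|[->|[->|[[m ->]|[m ->]]]]].
  - left; auto. - right; left; auto. - right; right; left; auto.
  - do 3 right; left; eauto. - do 4 right; eauto. Qed.

Lemma f_ge s t f (H : Hyp s t f) y : Xset s t y -> y <= f y.
Proof. intros Hy. pose proof H as H'. unH H'.
  destruct Hy as [->|[->|[->|[[m ->]|[m ->]]]]]; try lra.
  rewrite fs; left; apply Is; lia. rewrite ft; left; apply It; lia. Qed.

Lemma f_inj s t f (H : Hyp s t f) y z : Xset s t y -> Xset s t z -> f y = f z -> y = z.
Proof. intros Hy Hz Heq. pose proof (rs_ s t f H) as rs. pose proof (rt_ s t f H) as rt.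
  pose proof H as H'. unH H'.
  destruct Hy as [->|[->|[->|[[m ->]|[m ->]]]]];
  destruct Hz as [->|[->|[->|[[n ->]|[n ->]]]]];
  rewrite ?f0, ?f1, ?f2, ?fs, ?ft in Heq; try reflexivity;
  try (apply inc_inj in Heq; [|assumption]; f_equal; lia);
  match type of Heq with ?l = ?r => addr s t rs rt l; addr s t rs rt r end; lra.
Qed.

Lemma gap_s s t f (H : Hyp s t f) y n : Xset s t y -> y > s n -> y >= s (n+1)%Z.
Proof. intros Hy Hg. pose proof (rs_ s t f H) as rs. pose proof (rt_ s t f H) as rt.
  pose proof H as H'. unH H'. pose proof (rs n). pose proof (rs (n+1)%Z).
  destruct Hy as [->|[->|[->|[[m ->]|[m ->]]]]]; try lra.
  apply inc_lt_rev in Hg; auto. apply Rle_ge, inc_le; auto; lia.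
  pose proof (rt m); lra. Qed.

Lemma gap_t s t f (H : Hyp s t f) y n : Xset s t y -> y > t n -> y >= t (n+1)%Z.
Proof. intros Hy Hg. pose proof (rs_ s t f H) as rs. pose proof (rt_ s t f H) as rt.
  pose proof H as H'. unH H'. pose proof (rt n). pose proof (rt (n+1)%Z).
  destruct Hy as [->|[->|[->|[[m ->]|[m ->]]]]]; try lra.
  pose proof (rs m); lra.
  apply inc_lt_rev in Hg; auto. apply Rle_ge, inc_le; auto; lia. Qed.

Lemma F_s s t f (H : Hyp s t f) y n : Xset s t y -> y >= s n -> f y >= s (n+1)%Z.
Proof. intros Hy Hg. pose proof (f_ge s t f H y Hy). pose proof H as H'. unH H'.
  destruct (Req_dec y (s n)) as [->|Hne]. rewrite fs; lra.
  pose proof (gap_s s t f H y n Hy ltac:(lra)). lra. Qed.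

Lemma F_t s t f (H : Hyp s t f) y n : Xset s t y -> y >= t n -> f y >= t (n+1)%Z.
Proof. intros Hy Hg. pose proof (f_ge s t f H y Hy). pose proof H as H'. unH H'.
  destruct (Req_dec y (t n)) as [->|Hne]. rewrite ft; lra.
  pose proof (gap_t s t f H y n Hy ltac:(lra)). lra. Qed.
Lemma iso_s s t f (H : Hyp s t f) y n : Xset s t y ->
  Rabs (y - s n) < Rmin (s (n+1)%Z - s n) (s n - s (n-1)%Z) -> y = s n.
Proof. intros Hy Hd. pose proof (Rmin_l (s (n+1)%Z - s n) (s n - s (n-1)%Z)).
  pose proof (Rmin_r (s (n+1)%Z - s n) (s n - s (n-1)%Z)).
  assert (y > s (n-1)%Z) by rabs. pose proof (gap_s s t f H y (n-1) Hy H2).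
  replace (n-1+1)%Z with n in H3 by lia.
  destruct (Req_dec y (s n)); auto.
  pose proof (gap_s s t f H y n Hy ltac:(lra)). rabs. Qed.

Lemma iso_t s t f (H : Hyp s t f) y n : Xset s t y ->
  Rabs (y - t n) < Rmin (t (n+1)%Z - t n) (t n - t (n-1)%Z) -> y = t n.
Proof. intros Hy Hd. pose proof (Rmin_l (t (n+1)%Z - t n) (t n - t (n-1)%Z)).
  pose proof (Rmin_r (t (n+1)%Z - t n) (t n - t (n-1)%Z)).
  assert (y > t (n-1)%Z) by rabs. pose proof (gap_t s t f H y (n-1) Hy H2).
  replace (n-1+1)%Z with n in H3 by lia.
  destruct (Req_dec y (t n)); auto.
  pose proof (gap_t s t f H y n Hy ltac:(lra)). rabs. Qed.

Lemma gpos (q : Z -> R) n m : strictly_increasing_Z q -> (n < m)%Z -> q m - q n > 0.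
Proof. intros H Hl. pose proof (H n m Hl). lra. Qed.

Lemma homeo s t f (H : Hyp s t f) : is_homeomorphism_on (Xset s t) f.
Proof.
  pose proof (rs_ s t f H) as rs. pose proof (rt_ s t f H) as rt.
  pose proof H as H'. unH H'.
  split; [|split; [|split; [|split]]].
  - apply (f_X s t f H).
  - apply (f_inj s t f H).
  - intros y Hy. destruct Hy as [->|[->|[->|[[m ->]|[m ->]]]]].
    + exists 0; split; [left; auto | auto].
    + exists 1; split; [right; left; auto | auto].
    + exists 2; split; [right; right; left; auto | auto].
    + exists (s (m-1)%Z); split. do 3 right; left; eauto. rewrite fs; f_equal; lia.
    + exists (t (m-1)%Z); split. do 4 right; eauto. rewrite ft; f_equal; lia.
  - intros x Hx eps He. destruct Hx as [->|[->|[->|[[m ->]|[m ->]]]]].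
    + destruct (Ls0 eps He) as [N HN].
      pose proof (rs (N-1)%Z).
      exists (Rmin (s (N-1)%Z) (1/2)). split. apply Rmin_glb_lt; lra.
      intros z Hz Hd. pose proof (Rmin_l (s (N-1)%Z) (1/2)). pose proof (Rmin_r (s (N-1)%Z) (1/2)).
      destruct Hz as [->|[->|[->|[[n ->]|[n ->]]]]]; rewrite ?f0, ?f1, ?f2, ?fs, ?ft.
      * rabs.
      * rabs.
      * rabs.
      * pose proof (rs n). assert (s n < s (N-1)%Z) by rabs.
        apply inc_lt_rev in H4; auto. specialize (HN (n+1)%Z ltac:(lia)). rabs.
      * pose proof (rt n). rabs.
    + destruct (Lt1 eps He) as [N HN].
      pose proof (rt (N-1)%Z).
      exists (Rmin eps (Rmin (t (N-1)%Z - 1) (1/2))). split. repeat apply Rmin_glb_lt; lra.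
      intros z Hz Hd. pose proof (Rmin_l eps (Rmin (t (N-1)%Z - 1) (1/2))).
      pose proof (Rmin_r eps (Rmin (t (N-1)%Z - 1) (1/2))).
      pose proof (Rmin_l (t (N-1)%Z - 1) (1/2)). pose proof (Rmin_r (t (N-1)%Z - 1) (1/2)).
      destruct Hz as [->|[->|[->|[[n ->]|[n ->]]]]]; rewrite ?f0, ?f1, ?f2, ?fs, ?ft.
      * rabs.
      * rabs.
      * rabs.
      * pose proof (rs n). pose proof (rs (n+1)%Z). assert (s n < s (n+1)%Z) by (apply Is; lia). rabs.
      * pose proof (rt n). assert (t n < t (N-1)%Z) by rabs.
        apply inc_lt_rev in H6; auto. specialize (HN (n+1)%Z ltac:(lia)). rabs.
    + exists (Rmin eps (1/2)). split. apply Rmin_glb_lt; lra.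
      intros z Hz Hd. pose proof (Rmin_l eps (1/2)). pose proof (Rmin_r eps (1/2)).
      destruct Hz as [->|[->|[->|[[n ->]|[n ->]]]]]; rewrite ?f0, ?f1, ?f2, ?fs, ?ft.
      * rabs.
      * rabs.
      * rabs.
      * pose proof (rs n). rabs.
      * pose proof (rt n). pose proof (rt (n+1)%Z). assert (t n < t (n+1)%Z) by (apply It; lia). rabs.
    + exists (Rmin (s (m+1)%Z - s m) (s m - s (m-1)%Z)). split.
      apply Rmin_glb_lt; apply gpos; auto; lia.
      intros z Hz Hd. rewrite (iso_s s t f H z m Hz Hd). rabs.
    + exists (Rmin (t (m+1)%Z - t m) (t m - t (m-1)%Z)). split.
      apply Rmin_glb_lt; apply gpos; auto; lia.
      intros z Hz Hd. rewrite (iso_t s t f H z m Hz Hd). rabs.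
  - intros x Hx eps He. destruct Hx as [->|[->|[->|[[m ->]|[m ->]]]]].
    + exists (Rmin eps (1/2)). split. apply Rmin_glb_lt; lra.
      intros z Hz Hd. pose proof (Rmin_l eps (1/2)). pose proof (Rmin_r eps (1/2)).
      destruct Hz as [->|[->|[->|[[n ->]|[n ->]]]]]; rewrite ?f0, ?f1, ?f2, ?fs, ?ft in Hd.
      * rabs.
      * rabs.
      * rabs.
      * pose proof (rs n). pose proof (rs (n+1)%Z). assert (s n < s (n+1)%Z) by (apply Is; lia). rabs.
      * pose proof (rt (n+1)%Z). rabs.
    + destruct (Ls1 eps He) as [N HN].
      pose proof (rs (N+1)%Z).
      exists (Rmin eps (Rmin (1 - s (N+1)%Z) (1/2))). split. repeat apply Rmin_glb_lt; lra.
      intros z Hz Hd. pose proof (Rmin_l eps (Rmin (1 - s (N+1)%Z) (1/2))).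
      pose proof (Rmin_r eps (Rmin (1 - s (N+1)%Z) (1/2))).
      pose proof (Rmin_l (1 - s (N+1)%Z) (1/2)). pose proof (Rmin_r (1 - s (N+1)%Z) (1/2)).
      destruct Hz as [->|[->|[->|[[n ->]|[n ->]]]]]; rewrite ?f0, ?f1, ?f2, ?fs, ?ft in Hd.
      * rabs.
      * rabs.
      * rabs.
      * pose proof (rs (n+1)%Z). assert (s (N+1)%Z < s (n+1)%Z) by rabs.
        apply inc_lt_rev in H6; auto. specialize (HN n ltac:(lia)). rabs.
      * pose proof (rt n). pose proof (rt (n+1)%Z). assert (t n < t (n+1)%Z) by (apply It; lia). rabs.
    + destruct (Lt2 eps He) as [N HN].
      pose proof (rt (N+1)%Z).
      exists (Rmin (2 - t (N+1)%Z) (1/2)). split. repeat apply Rmin_glb_lt; lra.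
      intros z Hz Hd.
      pose proof (Rmin_l (2 - t (N+1)%Z) (1/2)). pose proof (Rmin_r (2 - t (N+1)%Z) (1/2)).
      destruct Hz as [->|[->|[->|[[n ->]|[n ->]]]]]; rewrite ?f0, ?f1, ?f2, ?fs, ?ft in Hd.
      * rabs.
      * rabs.
      * rabs.
      * pose proof (rs (n+1)%Z). rabs.
      * pose proof (rt (n+1)%Z). assert (t (N+1)%Z < t (n+1)%Z) by rabs.
        apply inc_lt_rev in H4; auto. specialize (HN n ltac:(lia)). rabs.
    + exists (Rmin (s (m+1+1)%Z - s (m+1)%Z) (s (m+1)%Z - s (m+1-1)%Z)). split.
      apply Rmin_glb_lt; apply gpos; auto; lia.
      intros z Hz Hd. rewrite fs in Hd.
      pose proof (iso_s s t f H (f z) (m+1) (f_X s t f H z Hz) Hd).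
      rewrite <- fs in H0. apply (f_inj s t f H) in H0; auto.
      subst; rabs. do 3 right; left; eauto.
    + exists (Rmin (t (m+1+1)%Z - t (m+1)%Z) (t (m+1)%Z - t (m+1-1)%Z)). split.
      apply Rmin_glb_lt; apply gpos; auto; lia.
      intros z Hz Hd. rewrite ft in Hd.
      pose proof (iso_t s t f H (f z) (m+1) (f_X s t f H z Hz) Hd).
      rewrite <- ft in H0. apply (f_inj s t f H) in H0; auto.
      subst; rabs. do 4 right; eauto.
Qed.
Lemma orb s t f (H : Hyp s t f) (g u : Z -> R) :
  (forall n, Xset s t (g n) /\ g (n+1)%Z = f (g n)) -> Z_orbit (Xset s t) f u ->
  u 0%Z = g 0%Z -> forall n, u n = g n.
Proof. intros Hg Hu H0. apply Z.peano_ind; auto.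
  - intros n IH. rewrite <- Z.add_1_r. rewrite (proj2 (Hu n)), (proj2 (Hg n)), IH; auto.
  - intros n IH. apply (f_inj s t f H). apply Hu. apply Hg.
    rewrite <- (proj2 (Hu (Z.pred n))), <- (proj2 (Hg (Z.pred n))).
    replace (Z.pred n + 1)%Z with n by lia. auto.
Qed.

Lemma orbit_class s t f (H : Hyp s t f) u : Z_orbit (Xset s t) f u ->
  (forall n, u n = 0) \/ (forall n, u n = 1) \/ (forall n, u n = 2) \/
  (exists k, forall n, u n = s (k+n)%Z) \/ (exists k, forall n, u n = t (k+n)%Z).
Proof. intros Hu. pose proof H as H'. unH H'.
  destruct (proj1 (Hu 0%Z)) as [E|[E|[E|[[m E]|[m E]]]]].
  - left. apply (orb s t f H (fun _ => 0)); auto. intros; split; [left; auto| auto].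
  - right; left. apply (orb s t f H (fun _ => 1)); auto. intros; split; [right; left; auto| auto].
  - right; right; left. apply (orb s t f H (fun _ => 2)); auto. intros; split; [right; right; left; auto| auto].
  - do 3 right; left. exists m. apply (orb s t f H (fun n => s (m+n)%Z)); auto.
    intros; split. do 3 right; left; eauto. rewrite fs; f_equal; lia.
    rewrite E; f_equal; lia.
  - do 4 right. exists m. apply (orb s t f H (fun n => t (m+n)%Z)); auto.
    intros; split. do 4 right; eauto. rewrite ft; f_equal; lia.
    rewrite E; f_equal; lia.
Qed.

Definition LM (u : Z -> R) a := exists N, forall n, (n <= N)%Z -> Rabs (u n - a) < 1/4.
Definition LP (u : Z -> R) a := exists N, forall n, (N <= n)%Z -> Rabs (u n - a) < 1/4.

Lemma LM_c u c : (forall n, u n = c) -> LM u c.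
Proof. intros Hu. exists 0%Z. intros n _. rewrite Hu. rabs. Qed.
Lemma LP_c u c : (forall n, u n = c) -> LP u c.
Proof. intros Hu. exists 0%Z. intros n _. rewrite Hu. rabs. Qed.
Lemma LM_q u q k a : (forall n, u n = q (k+n)%Z) -> lim_Zminus q a -> LM u a.
Proof. intros Hu Hq. destruct (Hq (1/4) ltac:(lra)) as [N HN]. exists (N-k)%Z.
  intros n Hn. rewrite Hu. apply HN; lia. Qed.
Lemma LP_q u q k a : (forall n, u n = q (k+n)%Z) -> lim_Zplus q a -> LP u a.
Proof. intros Hu Hq. destruct (Hq (1/4) ltac:(lra)) as [N HN]. exists (N-k)%Z.
  intros n Hn. rewrite Hu. apply HN; lia. Qed.

Lemma cmpM u v a b : (forall n, Rabs (u n - v n) <= 1/4) -> LM u a -> LM v b -> Rabs (a - b) < 3/4.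
Proof. intros Huv [N1 H1] [N2 H2]. set (n := Z.min N1 N2).
  specialize (H1 n ltac:(unfold n; lia)). specialize (H2 n ltac:(unfold n; lia)).
  specialize (Huv n). clearbody n. rabs. Qed.
Lemma cmpP u v a b : (forall n, Rabs (u n - v n) <= 1/4) -> LP u a -> LP v b -> Rabs (a - b) < 3/4.
Proof. intros Huv [N1 H1] [N2 H2]. set (n := Z.max N1 N2).
  specialize (H1 n ltac:(unfold n; lia)). specialize (H2 n ltac:(unfold n; lia)).
  specialize (Huv n). clearbody n. rabs. Qed.

Lemma orbit_lims s t f (H : Hyp s t f) u : Z_orbit (Xset s t) f u ->
  (LM u 0 /\ LP u 0 /\ forall n, u n = 0) \/ (LM u 1 /\ LP u 1 /\ forall n, u n = 1) \/
  (LM u 2 /\ LP u 2 /\ forall n, u n = 2) \/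
  (LM u 0 /\ LP u 1 /\ exists k, forall n, u n = s (k+n)%Z) \/
  (LM u 1 /\ LP u 2 /\ exists k, forall n, u n = t (k+n)%Z).
Proof. intros Hu. pose proof H as H'. unH H'.
  destruct (orbit_class s t f H u Hu) as [E|[E|[E|[[k E]|[k E]]]]].
  - left; repeat split; auto using LM_c, LP_c.
  - right; left; repeat split; auto using LM_c, LP_c.
  - right; right; left; repeat split; auto using LM_c, LP_c.
  - do 3 right; left; repeat split; eauto using LM_q, LP_q.
  - do 4 right; repeat split; eauto using LM_q, LP_q.
Qed.

Lemma shift_sep (q : Z -> R) k k' e : strictly_increasing_Z q -> e < q 1%Z - q 0%Z ->
  (forall n, Rabs (q (k+n)%Z - q (k'+n)%Z) <= e) -> k = k'.
Proof. intros Hq He Hn. destruct (Z.lt_total k k') as [Hl|[Hl|Hl]]; auto; exfalso.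
  - specialize (Hn (-k)%Z). replace (k + - k)%Z with 0%Z in Hn by lia.
    assert (q 1%Z <= q (k' + - k)%Z) by (apply inc_le; auto; lia). rabs.
  - specialize (Hn (-k')%Z). replace (k' + - k')%Z with 0%Z in Hn by lia.
    assert (q 1%Z <= q (k + - k')%Z) by (apply inc_le; auto; lia). rabs.
Qed.

Lemma expans s t f (H : Hyp s t f) : expansive_on (Xset s t) f.
Proof.
  pose proof H as H'. unH H'.
  set (e := Rmin (1/4) (Rmin ((s 1%Z - s 0%Z)/2) ((t 1%Z - t 0%Z)/2))).
  assert (gs : s 1%Z - s 0%Z > 0) by (apply gpos; auto; lia).
  assert (gt : t 1%Z - t 0%Z > 0) by (apply gpos; auto; lia).
  assert (E1 : e <= 1/4) by (unfold e; apply Rmin_l).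
  assert (E2 : e <= (s 1%Z - s 0%Z)/2) by (unfold e; eapply Rle_trans; [apply Rmin_r| apply Rmin_l]).
  assert (E3 : e <= (t 1%Z - t 0%Z)/2) by (unfold e; eapply Rle_trans; [apply Rmin_r| apply Rmin_r]).
  assert (E0 : e > 0) by (unfold e; repeat apply Rmin_glb_lt; lra).
  clearbody e.
  exists e. split. auto.
  intros u v Hu Hv Huv.
  assert (Huv' : forall n, Rabs (u n - v n) <= 1/4) by (intros n; specialize (Huv n); lra).
  destruct (orbit_lims s t f H u Hu) as [(A1&A2&A3)|[(A1&A2&A3)|[(A1&A2&A3)|[(A1&A2&k&A3)|(A1&A2&k&A3)]]]];
  destruct (orbit_lims s t f H v Hv) as [(B1&B2&B3)|[(B1&B2&B3)|[(B1&B2&B3)|[(B1&B2&k'&B3)|(B1&B2&k'&B3)]]]];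
  try (rewrite A3, B3; reflexivity);
  try (pose proof (cmpM u v _ _ Huv' A1 B1); pose proof (cmpP u v _ _ Huv' A2 B2);
       clear - H0 H1; rabs).
  - rewrite A3, B3. f_equal. f_equal. apply (shift_sep s k k' e); auto. lra.
    intros n. rewrite <- A3, <- B3. auto.
  - rewrite A3, B3. f_equal. f_equal. apply (shift_sep t k k' e); auto. lra.
    intros n. rewrite <- A3, <- B3. auto.
Qed.
Lemma small (f : R -> R) (x : nat -> R) g : Un_cv (fun i => Rabs (f (x i) - x (S i))) 0 -> g > 0 ->
  exists M, forall i, (i >= M)%nat -> Rabs (f (x i) - x (S i)) < g.
Proof. intros Hc Hg. destruct (Hc g Hg) as [M HM]. exists M. intros i Hi.
  specialize (HM i Hi). unfold Rdist in HM. rewrite Rminus_0_r, Rabs_Rabsolu in HM. auto. Qed.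

Lemma stay (X : R -> Prop) f (x : nat -> R) (q : Z -> R) n :
  (forall i, X (x i)) -> Un_cv (fun i => Rabs (f (x i) - x (S i))) 0 ->
  q n < q (n+1)%Z ->
  (forall y, X y -> y >= q n -> f y >= q (n+1)%Z) ->
  (forall y, X y -> y > q n -> y >= q (n+1)%Z) ->
  exists M, forall i, (i >= M)%nat -> x i >= q n -> x (S i) >= q (n+1)%Z.
Proof. intros Hx Hc Hl HF HG. destruct (small f x (q (n+1)%Z - q n) Hc ltac:(lra)) as [M HM].
  exists M. intros i Hi Hxi. specialize (HM i Hi). specialize (HF _ (Hx i) Hxi).
  apply HG; auto. rabs. Qed.

Definition Ev (x : nat -> R) p := exists N, forall i, (i >= N)%nat -> x i >= p.

Section G.
Context (X : R -> Prop) (f : R -> R) (x : nat -> R) (q : Z -> R)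
  (Hx : forall i, X (x i)) (Hc : Un_cv (fun i => Rabs (f (x i) - x (S i))) 0)
  (Hq : strictly_increasing_Z q)
  (HF : forall n y, X y -> y >= q n -> f y >= q (n+1)%Z)
  (HG : forall n y, X y -> y > q n -> y >= q (n+1)%Z).

Lemma ev_next n : Ev x (q n) -> Ev x (q (n+1)%Z).
Proof. intros [N HN]. destruct (stay X f x q n Hx Hc (Hq n (n+1)%Z ltac:(lia)) (HF n) (HG n)) as [M HM].
  exists (S (Nat.max N M)). intros i Hi. destruct i. lia.
  apply HM. lia. apply HN. lia. Qed.

Lemma ev_all n m : Ev x (q n) -> Ev x (q m).
Proof. intros Hn. destruct (Z_le_gt_dec m n).
  - destruct Hn as [N HN]. exists N. intros i Hi. specialize (HN i Hi).
    pose proof (inc_le q m n Hq l). lra.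
  - replace m with (n + Z.of_nat (Z.to_nat (m - n)))%Z by lia.
    induction (Z.to_nat (m - n)). rewrite Z.add_0_r; auto.
    rewrite Nat2Z.inj_succ, <- Z.add_1_r, Z.add_assoc. apply ev_next; auto.
Qed.

Lemma dich n : ~ Ev x (q n) -> exists N, forall i, (i >= N)%nat -> x i < q n.
Proof. intros Hn. destruct (stay X f x q n Hx Hc (Hq n (n+1)%Z ltac:(lia)) (HF n) (HG n)) as [M HM].
  exists M. intros i Hi. destruct (Rlt_le_dec (x i) (q n)); auto. exfalso. apply Hn.
  exists i. intros j Hj. induction Hj. lra.
  pose proof (HM m ltac:(lia) IHHj). pose proof (Hq n (n+1)%Z ltac:(lia)). lra.
Qed.
End G.

Lemma iter_fix (f : R -> R) y i : f y = y -> Nat.iter i f y = y.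
Proof. intros Hf. induction i; simpl; auto. rewrite IHi; auto. Qed.

Lemma limsh s t f (H : Hyp s t f) : limit_shadowing_on (Xset s t) f.
Proof.
  intros x Hx Hc. pose proof (rs_ s t f H) as rs. pose proof (rt_ s t f H) as rt.
  pose proof H as H'. unH H'.
  assert (Hb : forall i, 0 <= x i <= 2) by (intros i; apply (X_bd s t f H), Hx).
  pose proof (ev_all (Xset s t) f x s Hx Hc Is (fun n y Hy => F_s s t f H y n Hy) (fun n y Hy => gap_s s t f H y n Hy)) as EAs.
  pose proof (ev_all (Xset s t) f x t Hx Hc It (fun n y Hy => F_t s t f H y n Hy) (fun n y Hy => gap_t s t f H y n Hy)) as EAt.
  pose proof (dich (Xset s t) f x s Hx Hc Is (fun n y Hy => F_s s t f H y n Hy) (fun n y Hy => gap_s s t f H y n Hy)) as Ds.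
  pose proof (dich (Xset s t) f x t Hx Hc It (fun n y Hy => F_t s t f H y n Hy) (fun n y Hy => gap_t s t f H y n Hy)) as Dt.
  destruct (classic (exists n, Ev x (s n))) as [[n0 En0]|NEs].
  - destruct (classic (exists n, Ev x (t n))) as [[n1 En1]|NEt].
    + exists 2. split. right; right; left; auto.
      intros eps He. destruct (Lt2 eps He) as [N HN]. destruct (EAt n1 N En1) as [M HM].
      exists M. intros i Hi. unfold Rdist. rewrite iter_fix by auto.
      specialize (HM i Hi). specialize (HN N ltac:(lia)). specialize (Hb i). rabs.
    + exists 1. split. right; left; auto.
      intros eps He. destruct (Ls1 eps He) as [N1 HN1]. destruct (Lt1 eps He) as [N2 HN2].
      destruct (EAs n0 N1 En0) as [M1 HM1].
      destruct (Dt N2 (fun E => NEt (ex_intro _ N2 E))) as [M2 HM2].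
      exists (Nat.max M1 M2). intros i Hi. unfold Rdist. rewrite iter_fix by auto.
      specialize (HM1 i ltac:(lia)). specialize (HM2 i ltac:(lia)).
      specialize (HN1 N1 ltac:(lia)). specialize (HN2 N2 ltac:(lia)). rabs.
  - exists 0. split. left; auto.
    intros eps He. destruct (Ls0 eps He) as [N HN].
    destruct (Ds N (fun E => NEs (ex_intro _ N E))) as [M HM].
    exists M. intros i Hi. unfold Rdist. rewrite iter_fix by auto.
    specialize (HM i Hi). specialize (HN N ltac:(lia)). specialize (Hb i). rabs.
Qed.
Lemma nosh s t f (H : Hyp s t f) : ~ shadowing_on (Xset s t) f.
Proof.
  intros Hsh. pose proof (rs_ s t f H) as rs. pose proof (rt_ s t f H) as rt.
  pose proof H as H'. unH H'.
  destruct (Hsh (1/4) ltac:(lra)) as [d [Hd Hs]]. clear Hsh.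
  destruct (Ls0 (Rmin d (1/4)) ltac:(apply Rmin_glb_lt; lra)) as [a Ha].
  specialize (Ha a ltac:(lia)).
  pose proof (Rmin_l d (1/4)). pose proof (Rmin_r d (1/4)).
  destruct (Ls1 (d/2) ltac:(lra)) as [B HB].
  destruct (Lt1 (d/2) ltac:(lra)) as [c Hc].
  destruct (Lt2 (1/2) ltac:(lra)) as [T HT].
  set (b := Z.max B a).
  set (x := fun i : nat => if (a + Z.of_nat i <=? b)%Z then s (a + Z.of_nat i)%Z
                           else t (c + (a + Z.of_nat i) - b - 1)%Z).
  destruct (Hs x) as [y [Hy Hyx]].
  - intros i. unfold x. destruct (a + Z.of_nat i <=? b)%Z.
    do 3 right; left; eauto. do 4 right; eauto.
  - intros i. unfold x. replace (a + Z.of_nat (S i))%Z with (a + Z.of_nat i + 1)%Z by lia.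
    destruct (Z.leb_spec (a + Z.of_nat i) b); destruct (Z.leb_spec (a + Z.of_nat i + 1) b).
    + rewrite fs. rabs.
    + assert (E : (a + Z.of_nat i = b)%Z) by lia. rewrite E, fs.
      replace (c + (b+1) - b - 1)%Z with c by lia.
      specialize (HB (b+1)%Z ltac:(unfold b; lia)). specialize (Hc c ltac:(lia)).
      pose proof (rs (b+1)%Z). pose proof (rt c). rabs.
    + lia.
    + rewrite ft. replace (c + (a + Z.of_nat i) - b - 1 + 1)%Z with (c + (a + Z.of_nat i + 1) - b - 1)%Z by lia.
      rabs.
  - assert (Hy1 : y < 1/2).
    { specialize (Hyx 0%nat). simpl in Hyx. unfold x in Hyx.
      replace (a + Z.of_nat 0)%Z with a in Hyx by lia.
      destruct (Z.leb_spec a b) as [_|Hab]; [|unfold b in Hab; lia]. rabs. }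
    assert (Hinv : forall i, Nat.iter i f y = 0 \/ exists m, Nat.iter i f y = s m).
    { induction i.
      - simpl. destruct Hy as [->|[->|[->|[[m ->]|[m ->]]]]]; try lra.
        all: try (left; reflexivity); try (right; eexists; reflexivity); try (pose proof (rt m); lra).
      - simpl. destruct IHi as [->|[m ->]]. left; auto. right. rewrite fs; eauto. }
    set (i0 := Z.to_nat (Z.abs T + Z.abs b + Z.abs c + Z.abs a + 1)).
    specialize (Hyx i0). specialize (Hinv i0).
    assert (Ei : Z.of_nat i0 = (Z.abs T + Z.abs b + Z.abs c + Z.abs a + 1)%Z) by (unfold i0; lia).
    unfold x in Hyx. rewrite Ei in Hyx.
    destruct (Z.leb_spec (a + (Z.abs T + Z.abs b + Z.abs c + Z.abs a + 1)) b) as [Hl|_]. lia.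
    specialize (HT (c + (a + (Z.abs T + Z.abs b + Z.abs c + Z.abs a + 1)) - b - 1)%Z ltac:(lia)).
    destruct Hinv as [E|[m E]]; rewrite E in Hyx. rabs. pose proof (rs m). rabs.
Qed.

Theorem mainTheorem13 (s t : Z -> R) (f : R -> R) :
  strictly_increasing_Z s -> strictly_increasing_Z t ->
  lim_Zminus s 0 -> lim_Zplus s 1 -> lim_Zminus t 1 -> lim_Zplus t 2 ->
  f 0 = 0 -> f 1 = 1 -> f 2 = 2 ->
  (forall n : Z, f (s n) = s (n + 1)%Z) ->
  (forall n : Z, f (t n) = t (n + 1)%Z) ->
  is_homeomorphism_on (Xset s t) f /\
  expansive_on (Xset s t) f /\
  limit_shadowing_on (Xset s t) f /\
  ~ shadowing_on (Xset s t) f.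
Proof.
  intros. assert (H' : Hyp s t f) by (repeat split; auto).
  split; [apply homeo|split; [apply expans|split; [apply limsh|apply nosh]]]; auto.
Qed.
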